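(* Let $X_1,\dots,X_k$ be i.i.d. random points in $\mathbb{R}^d$ with a bounded probability density $f$. Then there exists a constant $c^\star$ (depending only on $d$, $f$ and $k$) such that for every $r>0$, \[ \mathbb{P}\{\{X_1,\dots,X_k\}\text{ is contained in a ball of radius } r\}\le c^\star r^{d(k-1)}. \] *)

(* Defs.v *)
From HB Require Import structures.
From mathcomp Require Import all_boot all_order all_algebra.
From mathcomp Require Import all_classical all_reals all_analysis.
Set Implicit Arguments. Unset Strict Implicit. Unset Printing Implicit Defensive.
Import Order.TTheory GRing.Theory Num.Theory.
Local Open Scope classical_set_scope.
Local Open Scope ring_scope.

(* Points of R^d are represented as d-tuples of reals; d.-tuple R carries the
   product sigma-algebra (library instance, measure_tuple_display). *)

(* Lebesgue integral on R^n of a non-negative function, defined as the iterated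
   one-dimensional Lebesgue integral (by Tonelli this is the integral against
   the n-dimensional Lebesgue measure for non-negative measurable g). *)
Fixpoint lebesgue_int_tuple {R : realType} (n : nat) :
    (n.-tuple R -> \bar R) -> \bar R :=
  match n return (n.-tuple R -> \bar R) -> \bar R with
  | 0 => fun g => g [tuple]
  | n'.+1 => fun g =>
      (\int[@lebesgue_measure R]_(x in [set: R])
         lebesgue_int_tuple (fun t : n'.-tuple R => g (cons_tuple x t)))%E
  end.

Definition has_density {R : realType} {dO : measure_display}
    {O : measurableType dO} (P : probability O R) (d : nat)
    (Y : O -> d.-tuple R) (f : d.-tuple R -> R) : Prop :=
  forall A : set (d.-tuple R), measurable A ->
    P (Y @^-1` A) = lebesgue_int_tuple (fun x => ((\1_A x : R) * f x)%:E).

Definition mutually_independent {R : realType} {dO : measure_display}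
    {O : measurableType dO} (P : probability O R) (d k : nat)
    (X : 'I_k -> O -> d.-tuple R) : Prop :=
  forall A : 'I_k -> set (d.-tuple R), (forall i, measurable (A i)) ->
    P (\big[setI/setT]_(i < k) (X i @^-1` A i)) =
    (\prod_(i < k) P (X i @^-1` A i))%E.

Definition sqdist {R : realType} (d : nat) (x y : d.-tuple R) : R :=
  \sum_(j < d) (tnth x j - tnth y j) ^+ 2.

Definition in_ball_event {R : realType} {O : Type} (d k : nat)
    (X : 'I_k -> O -> d.-tuple R) (r : R) : set O :=
  [set w | exists c : d.-tuple R, forall i, sqdist (X i w) c <= r ^+ 2].

(* Main.v *)
Require Import Defs.
From HB Require Import structures.
From mathcomp Require Import all_boot all_order all_algebra.
From mathcomp Require Import all_classical all_reals all_analysis.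
From mathcomp Require Import ring lra zify.
Import Order.TTheory GRing.Theory Num.Theory.
Local Open Scope classical_set_scope.
Local Open Scope ring_scope.
Set Implicit Arguments. Unset Strict Implicit.


Section alg.
Variable R : realType.
Variable d : nat.
Implicit Types x y a b : d.-tuple R.

Lemma sqdist_ge0 x y : 0 <= sqdist x y.
Proof. by apply: sumr_ge0 => j _; apply: sqr_ge0. Qed.

Lemma sqdist_coord x y j : (tnth x j - tnth y j) ^+ 2 <= sqdist x y.
Proof.
rewrite /sqdist (bigD1 j) //= lerDl; apply: sumr_ge0 => i _; exact: sqr_ge0.
Qed.

Definition mid a b : d.-tuple R := [tuple (tnth a j + tnth b j) / 2 | j < d].

Lemma sqdist_mid x a b :
  sqdist x (mid a b) = (sqdist x a + sqdist x b) / 2 - sqdist a b / 4.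
Proof.
rewrite /sqdist -big_split !mulr_suml -sumrB; apply: eq_bigr => j _ /=.
by rewrite tnth_mktuple; field.
Qed.

Lemma sqdist_perturb x a b (B e : R) : 0 <= B -> 0 <= e ->
  (forall j, `|tnth x j - tnth a j| <= B) ->
  (forall j, `|tnth a j - tnth b j| <= e) ->
  sqdist x b <= sqdist x a + d%:R * (2 * B * e + e ^+ 2).
Proof.
move=> B0 e0 hB he.
rewrite /sqdist mulr_natl -[X in _ *+ X]card_ord -sumr_const -big_split /=.
apply: ler_sum => j _.
have := hB j; have := he j; rewrite !ler_norml.
move=> /andP[h1 h2] /andP[h3 h4].
nra.
Qed.
End alg.


Lemma countable_bigcapT_meas dT (T : measurableType dT) (U : countType)
  (F : U -> set T) : (forall i, measurable (F i)) -> measurable (\bigcap_i F i).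
Proof.
move=> mF; rewrite -[X in measurable X]setCK setC_bigcap; apply: measurableC.
apply: countable_bigcupT_measurable; first exact: countableP.
by move=> i; apply: measurableC.
Qed.

Lemma bigsetI_meas dT (T : measurableType dT) (I : Type) (s : seq I)
  (F : I -> set T) : (forall i, measurable (F i)) ->
  measurable (\big[setI/setT]_(i <- s) F i).
Proof. by move=> mF; apply: big_ind => //; exact: measurableI. Qed.

Lemma in_bigsetI (T : Type) (I : eqType) (s : seq I) (F : I -> set T) w :
  (\big[setI/setT]_(i <- s) F i) w <-> (forall i, i \in s -> F i w).
Proof.
elim: s => [|a s IH]; first by rewrite big_nil.
rewrite big_cons; split.
  move=> [Ha /IH Hs] i; rewrite inE => /orP[/eqP->//|]; exact: Hs.
move=> H; split; first by apply: H; rewrite mem_head.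
by apply/IH => i si; apply: H; rewrite inE si orbT.
Qed.

Section meas.
Variable R : realType.

Lemma meas_tuple_set d (P : 'I_d -> set R) : (forall j, measurable (P j)) ->
  measurable [set t : d.-tuple R | forall j, P j (tnth t j)].
Proof.
move=> mP.
have -> : [set t : d.-tuple R | forall j, P j (tnth t j)] =
    \bigcap_j ((@tnth d R)^~ j @^-1` P j).
  by apply/seteqP; split => t /= H j; [move=> _; exact: H | exact: H].
apply: (@countable_bigcapT_meas _ _ (ordinal d)) => j.
by rewrite -[X in measurable X]setTI; apply: measurable_tnth.
Qed.

Lemma meas_sqdist_le dO (O : measurableType dO) d (Y : O -> d.-tuple R)
  (c : d.-tuple R) (t : R) : measurable_fun [set: O] Y ->
  measurable [set w | sqdist (Y w) c <= t].
Proof.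
move=> mY.
rewrite -[X in measurable X]setTI.
apply: measurable_fun_le => //.
apply: measurable_sum => j.
apply: measurable_realfun.measurable_funX; apply: measurable_realfun.measurable_funB => //.
exact: measurableT_comp (measurable_tnth j) mY.
Qed.
End meas.


Section aux0.
Variable R : realType.
Local Open Scope ereal_scope.
Lemma int_mono dT (T : measurableType dT) (mu : {measure set T -> \bar R}) (f g : T -> \bar R) :
  (forall x, 0 <= f x)%E -> (forall x, f x <= g x)%E ->
  (\int[mu]_(x in [set: T]) f x <= \int[mu]_(x in [set: T]) g x)%E.
Proof.
move=> f0 fg.
have g0 : forall x, (0 <= g x)%E by move=> x; exact: le_trans (f0 x) (fg x).
rewrite /integral !patch_setT.
have -> : f^\- = cst 0%E.
  by apply/funext => x; rewrite (@ge0_funenegE _ _ setT) // inE.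
have -> : g^\- = cst 0%E.
  by apply/funext => x; rewrite (@ge0_funenegE _ _ setT) // inE.
have -> : f^\+ = f.
  by apply/funext => x; rewrite (@ge0_funeposE _ _ setT) // inE.
have -> : g^\+ = g.
  by apply/funext => x; rewrite (@ge0_funeposE _ _ setT) // inE.
apply: leeB => //.
apply: le_ereal_sup => _ [h hf <-]; exists h => //= x.
exact: le_trans (hf x) (fg x).
Qed.
End aux0.
Section aux.
Variable R : realType.

Lemma int_indic_itv (a b : R) : a <= b ->
  (\int[lebesgue_measure]_(x in [set: R]) (\1_[set` `[a,b]] x)%:E = (b - a)%:E)%E.
Proof.
move=> ab.
rewrite integral_indic //= setIT lebesgue_measure_itv /= lte_fin.
case: ifP => [_|]; first by rewrite EFinB.
move/negbT; rewrite -leNgt => ba.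
have -> : a = b by apply/eqP; rewrite eq_le ab ba.
by rewrite subrr.
Qed.

Lemma L_ge0 n (g : n.-tuple R -> \bar R) : (forall t, 0 <= g t)%E ->
  (0 <= lebesgue_int_tuple g)%E.
Proof.
elim: n g => [|n IH] g g0 /=; first exact: g0.
by apply: integral_ge0 => x _; apply: IH.
Qed.

Definition box n (c : n.-tuple R) (h : R) : set (n.-tuple R) :=
  [set t | forall j, `|tnth t j - tnth c j| <= h].
Arguments box {n}.

Lemma box_cons n (c0 x : R) (c t : n.-tuple R) h :
  box [tuple of c0 :: c] h [tuple of x :: t] <-> (`|x - c0| <= h /\ box c h t).
Proof.
split.
  move=> H; split; first by have := H ord0; rewrite !tnth0.
  by move=> j; have := H (lift ord0 j); rewrite !tnthS.
move=> [H1 H2] j; case: (unliftP ord0 j) => [j' ->|->].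
  by rewrite !tnthS.
by rewrite !tnth0.
Qed.

Lemma L_box n (c : n.-tuple R) (h M : R) (g : n.-tuple R -> \bar R) :
  0 <= h -> 0 <= M -> (forall t, 0 <= g t)%E -> (forall t, g t <= M%:E)%E ->
  (forall t, ~ box c h t -> g t = 0%E) ->
  (lebesgue_int_tuple g <= (M * (2 * h) ^+ n)%:E)%E.
Proof.
move=> h0.
elim: n c M g => [|n IH] c M g M0 g0 gM gbox /=.
  by rewrite expr0 mulr1.
case/tupleP: c gbox => c0 c gbox.
set A := [set` `[c0 - h, c0 + h]] : set R.
apply: (@le_trans _ _ (\int[lebesgue_measure]_(x in [set: R])
   ((M * (2 * h) ^+ n) * \1_A x)%:E)%E).
  apply: int_mono => x; first by apply: L_ge0 => t; exact: g0.
  have [xA|xA] := boolP (`|x - c0| <= h).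
    have -> : \1_A x = 1 :> R.
      by rewrite indicE mem_set // /A /= in_itv /= -ler_distl.
    rewrite mulr1; apply: IH => // t tb; apply: gbox.
    by move/box_cons => [_ /tb].
  have -> : \1_A x = 0 :> R.
    rewrite indicE memNset //= /A /= in_itv /= -ler_distl; exact/negP.
  rewrite mulr0; have := IH c 0 (fun t => g [tuple of x :: t]) (lexx _).
  rewrite mul0r; apply => // t; last first.
    by move=> _; apply: gbox; move/box_cons => [H _]; rewrite H in xA.
  rewrite (_ : g _ = 0%E) //; apply: gbox; by move/box_cons => [H _]; rewrite H in xA.
have hn0 : 0 <= M * (2 * h) ^+ n.
  by apply: mulr_ge0 => //; apply: exprn_ge0; apply: mulr_ge0.
have := @integralZl_indic _ _ _ lebesgue_measure setT measurableT (fun=> A) (M * (2 * h) ^+ n).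
move=> /= ->; last 2 first.
- by move=> /lt_le_trans /(_ hn0); rewrite ltxx.
- exact: measurable_itv.
rewrite int_indic_itv; last by rewrite lerD2l ge0_cp.
rewrite -EFinM lee_fin exprSr mulrA.
by rewrite opprB addrAC addrCA subrr addr0 mulr2n mulrDl mul1r.
Qed.

Lemma density_box dO (O : measurableType dO) (P : probability O R) d
  (Y : O -> d.-tuple R) (f : d.-tuple R -> R) (M : R) (B : set (d.-tuple R))
  (c : d.-tuple R) (h : R) :
  has_density P Y f -> (forall x, 0 <= f x) -> (forall x, f x <= M) ->
  0 <= M -> 0 <= h -> measurable B -> B `<=` box c h ->
  (P (Y @^-1` B) <= (M * (2 * h) ^+ d)%:E)%E.
Proof.
move=> hd f0 fM M0 h0 mB Bb; rewrite hd //; apply: (L_box (c:=c)) => // t.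
- by rewrite lee_fin indicE; case: (t \in B); rewrite ?mul1r ?mul0r.
- by rewrite lee_fin indicE; case: (t \in B); rewrite ?mul1r ?mul0r.
- move=> tb; rewrite indicE memNset ?mul0r //; exact: contra_not (@Bb t) tb.
Qed.
End aux.


Module CV.
Import numFieldNormedType.Exports.
Section lim.
Variable R : realType.

Lemma sq_le_abs (u r : R) : 0 <= r -> u ^+ 2 <= r ^+ 2 -> `|u| <= r.
Proof.
move=> r0 h; rewrite ler_norml; apply/andP; split; nra.
Qed.

Lemma sq_lt_abs (u r : R) : 0 < r -> u ^+ 2 < r ^+ 2 -> `|u| < r.
Proof.
move=> r0 h; rewrite ltr_norml; apply/andP; split; nra.
Qed.

Lemma inv_mono (N m : nat) : (N <= m)%N -> (m.+1%:R)^-1 <= (N.+1%:R : R)^-1.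
Proof.
by move=> Nm; rewrite lef_pV2 ?posrE ?ltr0Sn // ler_nat ltnS.
Qed.

Lemma exists_big (e : R) : 0 < e -> exists N : nat, forall n, (N <= n)%N ->
  (n.+1%:R)^-1 < e.
Proof.
move=> e0; exists (Num.truncn (e^-1)) => n Nn.
rewrite invf_plt ?posrE ?ltr0Sn //.
apply: (lt_le_trans (truncnS_gt _)); rewrite ler_nat; by [].
Qed.

Lemma cvg_of_cauchy (u : nat -> R) :
  (forall e, 0 < e -> exists N, forall m, (N <= m)%N -> `|u N - u m| < e) ->
  cvgn u.
Proof.
move=> H; apply: R_complete; apply: cauchy_exP => e e0.
have [N HN] := H e e0; exists (u N); exists N => // m /= Nm.

Qed.

End lim.

Section center.
Variable R : realType.
Variables (d k : nat).

Lemma limit_center (x : 'I_k -> d.-tuple R) (r : R) (c : nat -> d.-tuple R) :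
  0 < r ->
  (forall m i, sqdist (x i) (c m) <= r ^+ 2 + (m.+1%:R)^-1) ->
  exists c0, forall i, sqdist (x i) c0 <= r ^+ 2.
Proof.
move=> r0 hc.
case: (pselect (exists c0, forall i, sqdist (x i) c0 <= r ^+ 2)) => // Hn.
exfalso.
have hfar c0 : exists i, r ^+ 2 < sqdist (x i) c0.
  apply: contrapT => H; apply: Hn; exists c0 => i; rewrite leNgt.
  by apply/negP => hi; apply: H; exists i.
have cau m n j : (tnth (c m) j - tnth (c n) j) ^+ 2 <=
    2 * ((m.+1%:R)^-1 + (n.+1%:R)^-1).
  apply: (le_trans (sqdist_coord _ _ j)).
  have [i hi] := hfar (mid (c m) (c n)).
  rewrite sqdist_mid in hi.
  have := hc m i; have := hc n i. move: hi. set A := sqdist (x i) (c m). set B := sqdist (x i) (c n). set D := sqdist (c m) (c n). set em := (m.+1%:R)^-1. set en := (n.+1%:R)^-1. lra.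
pose u j n := tnth (c n) j.
have cv j : cvgn (u j).
  apply: cvg_of_cauchy => e e0.
  have e4 : 0 < e * e / 4 by apply: divr_gt0; [exact: mulr_gt0 | by []].
  have [N HN] := exists_big e4.
  exists N => m Nm; apply: sq_lt_abs => //.
  have := cau N m j; have := @inv_mono R _ _ Nm; have := HN N (leqnn N).
  rewrite /u; set a := (_ - _) ^+ 2; set eN := (N.+1%:R)^-1.
  set em := (m.+1%:R)^-1; rewrite expr2; lra.
pose l := [tuple limn (u j) | j < d].
apply: Hn; exists l => i; apply/ler_addgt0Pr => e e0.
pose e1 := Order.min e 1.
have e10 : 0 < e1 by rewrite lt_min e0 ltr01.
have e1e : e1 <= e by rewrite ge_min lexx.
pose B := r + 1.
have B0 : 0 <= B by rewrite /B; lra.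
pose D := d%:R * (2 * B + 1).
have D0 : 0 <= D by apply: mulr_ge0 => //; lra.
pose dl := e1 / (2 * (D + 1)).
have hdl : dl * (2 * (D + 1)) = e1.
  by rewrite /dl mulfVK //; apply/eqP => /eqP; lra.
have dl0 : 0 < dl by apply: divr_gt0 => //; lra.
have dl1 : dl <= 1.
  have : e1 <= 1 by rewrite ge_min lexx orbT.
  nra.
have hN j : exists N, forall n, (N <= n)%N -> `|limn (u j) - u j n| < dl.
  have := cv j; move/cvgrPdist_lt => /(_ dl dl0) [N _ HN].
  by exists N => n Nn; apply: HN.
have [Nf hNf] := choice hN.
have [N2 HN2] := exists_big (divr_gt0 e10 (ltr0n R 2)).
pose n := maxn (\max_(j < d) Nf j) N2.
have hn j : `|limn (u j) - u j n| < dl.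
  apply: hNf; apply: leq_trans (leq_maxl _ _); exact: leq_bigmax.
have hn2 : (n.+1%:R)^-1 < e1 / 2 by apply: HN2; exact: leq_maxr.
have hn1 : (n.+1%:R)^-1 <= (1 : R).
  by have := @inv_mono R 0 n (leq0n n); rewrite invr1.
have hxc := hc n i.
have := @sqdist_perturb R d (x i) (c n) l B dl B0 (ltW dl0).
have hB : forall j, `|tnth (x i) j - tnth (c n) j| <= B.
  move=> j; apply: sq_le_abs => //.
  apply: le_trans (sqdist_coord _ _ j) _; apply: le_trans hxc _.
  rewrite /B; move: hn1 r0; set en := (n.+1%:R)^-1; nra.
move=> /(_ hB) /(_ _) H.
have := H (fun j => ltac:(rewrite tnth_mktuple distrC; exact: ltW (hn j))).
move: hxc hn2 hn1.
set S1 := sqdist (x i) (c n); set S2 := sqdist (x i) l.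
set en := (n.+1%:R)^-1.
have dnn : 0 <= (d%:R : R) by [].
have h1 : d%:R * (2 * B * dl + dl ^+ 2) <= d%:R * (2 * B + 1) * dl.
  have : dl ^+ 2 <= dl by rewrite expr2; nra.
  move: dnn; set dd := (d%:R : R); nra.
have h2 : d%:R * (2 * B + 1) * dl <= e1 / 2.
  rewrite -/D; have : D * dl <= (D + 1) * dl by nra.
  lra.
move=> HS; lra.
Qed.
End center.
End CV.
Import CV.


Section approx.
Variable R : realType.
Variables (d k : nat).

Definition qr (q : d.-tuple rat) : d.-tuple R := map_tuple (fun a => ratr a) q.

Lemma approx_rat (x : 'I_k -> d.-tuple R) (r : R) (c : d.-tuple R) (m : nat) :
  0 < r -> (forall i, sqdist (x i) c <= r ^+ 2) ->
  exists q : d.-tuple rat, forall i, sqdist (x i) (qr q) <= r ^+ 2 + (m.+1%:R)^-1.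
Proof.
move=> r0 hc.
set e := (m.+1%:R)^-1 : R.
have e0 : 0 < e by rewrite /e invr_gt0 ltr0Sn.
have e1 : e <= 1 by have := @inv_mono R 0 m (leq0n m); rewrite invr1.
pose D := d%:R * (2 * r + 1).
have dnn : 0 <= (d%:R : R) by [].
have D0 : 0 <= D by apply: mulr_ge0 => //; lra.
pose dl := e / (D + 1).
have hdl : dl * (D + 1) = e by rewrite /dl mulfVK //; apply/eqP => /eqP; lra.
have dl0 : 0 < dl by apply: divr_gt0 => //; lra.
have hq j : exists a : rat, `|tnth c j - ratr a| < dl.
  have [a] := @rat_in_itvoo R (tnth c j - dl) (tnth c j + dl) ltac:(lra).
  by rewrite in_itv /= => H; exists a; rewrite distrC ltr_distl.
have [qf hqf] := choice hq.
exists [tuple qf j | j < d] => i.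
have hB : forall j, `|tnth (x i) j - tnth c j| <= r.
  move=> j; apply: sq_le_abs; first exact: ltW.
  exact: le_trans (sqdist_coord _ _ j) (hc i).
have he : forall j, `|tnth c j - tnth (qr [tuple qf j | j < d]) j| <= dl.
  by move=> j; rewrite /qr tnth_map tnth_mktuple; apply: ltW.
have := @sqdist_perturb R d (x i) c (qr [tuple qf j | j < d]) r dl
  (ltW r0) (ltW dl0) hB he.
have dl1 : dl <= 1 by nra.
have h1 : d%:R * (2 * r * dl + dl ^+ 2) <= D * dl.
  have : dl ^+ 2 <= dl by rewrite expr2; nra.
  rewrite /D; move: dnn; set dd := (d%:R : R); nra.
have := hc i; nra.
Qed.
End approx.

Lemma event_meas (R : realType) dO (O : measurableType dO) d k
  (X : 'I_k -> O -> d.-tuple R) (r : R) : 0 < r ->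
  (forall i, measurable_fun [set: O] (X i)) -> measurable (in_ball_event X r).
Proof.
move=> r0 mX.
have -> : in_ball_event X r = \bigcap_(m : nat) \bigcup_(q : d.-tuple rat)
    \bigcap_(i : 'I_k) [set w | sqdist (X i w) (@qr R d q) <= r ^+ 2 + (m.+1%:R)^-1].
  apply/seteqP; split => w /=.
    move=> [c hc] m _; have [q hq] := approx_rat (x := fun i => X i w) m r0 hc.
    by exists q => // i _; exact: hq i.
  move=> H.
  have hm m : exists q : d.-tuple rat, forall i,
      sqdist (X i w) (@qr R d q) <= r ^+ 2 + (m.+1%:R)^-1.
    by have [q _ hq] := H m I; exists q => i; exact: hq i I.
  have [qf hqf] := choice hm.
  exact: (limit_center (c := fun m => @qr R d (qf m))).
apply: countable_bigcapT_meas => m.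
apply: countable_bigcupT_measurable; first exact: countableP.
move=> q; apply: countable_bigcapT_meas => i.
exact: meas_sqdist_le.
Qed.


Section main.
Variable R : realType.

Lemma floor_uniq (a b : int) (y s : R) : 0 < s ->
  a%:~R * s <= y < (a%:~R + 1) * s ->
  b%:~R * s <= y < (b%:~R + 1) * s -> a = b.
Proof.
move=> s0 /andP[ha1 ha2] /andP[hb1 hb2].
have h1 : (a%:~R : R) < b%:~R + 1 by nra.
have h2 : (b%:~R : R) < a%:~R + 1 by nra.
have : (a < b + 1)%R by rewrite -(ltr_int R) intrD.
have : (b < a + 1)%R by rewrite -(ltr_int R) intrD.
lia.
Qed.

Lemma floor_in (y s : R) : 0 < s ->
  (Num.floor (y / s))%:~R * s <= y < ((Num.floor (y / s))%:~R + 1) * s.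
Proof.
move=> s0; apply/andP; split.
  by rewrite -ler_pdivlMr // floor_le.
rewrite -ltr_pdivrMr //; have := floor_lt_int (y / s) (Num.floor (y / s) + 1).
by rewrite intrD ltzD1 lexx => /esym.
Qed.

Lemma box_meas d (c : d.-tuple R) (h : R) : measurable (box c h).
Proof.
have -> : box c h = [set t | forall j,
    [set` `[tnth c j - h, tnth c j + h]] (tnth t j)].
  apply/seteqP; split => t /= H j; have := H j.
    by rewrite ler_distl => hh; rewrite /= in_itv /= hh.
  by rewrite /= in_itv /= ler_distl.
apply: (@meas_tuple_set R d (fun j => [set` `[tnth c j - h, tnth c j + h]])) => j; exact: measurable_itv.
Qed.

Lemma preim_meas dO (O : measurableType dO) d (Y : O -> d.-tuple R)
  (B : set (d.-tuple R)) :
  measurable_fun [set: O] Y -> measurable B -> measurable (Y @^-1` B).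
Proof. by move=> mY mB; rewrite -[X in measurable X]setTI; apply: mY. Qed.

Lemma prod_le n (F : 'I_n -> \bar R) (K : R) : 0 <= K ->
  (forall i, 0 <= F i)%E -> (forall i, F i <= K%:E)%E ->
  (\prod_(i < n) F i <= (K ^+ n)%:E)%E.
Proof.
move=> K0 F0 FK; elim: n F F0 FK => [|n IH] F F0 FK.
  by rewrite big_ord0 expr0.
rewrite big_ord_recr /= exprSr EFinM; apply: lee_pmul => //.
  by apply: prode_ge0 => i _.
by apply: IH.
Qed.

End main.

Unset Implicit Arguments. Set Strict Implicit.

Theorem lemma5p1 (R : realType) (d k : nat) (f : d.-tuple R -> R) :
  (0 < k)%N ->
  measurable_fun [set: d.-tuple R] f ->
  (forall x, 0 <= f x) ->
  (exists M : R, forall x, f x <= M) ->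
  exists cstar : R,
    forall (dO : measure_display) (O : measurableType dO)
           (P : probability O R) (X : 'I_k -> O -> d.-tuple R),
      (forall i, measurable_fun [set: O] (X i)) ->
      (forall i, has_density P (X i) f) ->
      mutually_independent P X ->
      forall r : R, 0 < r ->
        (P (in_ball_event X r) <= (cstar * r ^+ (d * k.-1))%:E)%E.
Proof.
move=> k0 mf f0 [M fM].
have M0 : 0 <= M by apply: le_trans (f0 [tuple 0 | _ < d]) (fM _).
case: k k0 => [//|k] _ /=.
exists ((M * 6 ^+ d) ^+ k).
move=> dO O P X mX hd hind r r0.
pose s := 2 * r.
have s0 : 0 < s by rewrite /s; lra.
pose Q (z : d.-tuple int) : set (d.-tuple R) := [set t | forall j,
  [set` `[(tnth z j)%:~R * s, ((tnth z j)%:~R + 1) * s[] (tnth t j)].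
pose ctr (z : d.-tuple int) : d.-tuple R := [tuple (tnth z j)%:~R * s + r | j < d].
pose Qs z := box (ctr z) (3 * r).
pose Bn n (i : 'I_k.+1) : set (d.-tuple R) := match pickle_inv n with
  | Some z => if i == ord0 then Q z else Qs z | None => set0 end.
pose A n := \big[setI/setT]_(i < k.+1) (X i @^-1` Bn n i).
have mQ z : measurable (Q z).
  by apply: (@meas_tuple_set R d (fun j => _)) => j; exact: measurable_itv.
have mB n i : measurable (Bn n i).
  rewrite /Bn; case: (pickle_inv n) => // z; case: ifP => _ //.
  exact: box_meas.
have mA n : measurable (A n).
  by apply: bigsetI_meas => i; apply: preim_meas.
have cover : in_ball_event X r `<=` \bigcup_n A n.
  move=> w [c hc].
  pose z := [tuple Num.floor (tnth (X ord0 w) j / s) | j < d].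
  exists (pickle z) => //.
  apply/in_bigsetI => i _; rewrite /Bn /= pickleK_inv.
  have hXc i' j : `|tnth (X i' w) j - tnth c j| <= r.
    apply: sq_le_abs; first exact: ltW.
    exact: le_trans (sqdist_coord _ _ j) (hc i').
  have hz j := floor_in (tnth (X ord0 w) j) s0.
  case: ifP => [/eqP -> j|_ j].
    by rewrite /= in_itv /= tnth_mktuple.
  have := hz j; rewrite tnth_mktuple.
  have := hXc i j; have := hXc ord0 j.
  rewrite /ctr tnth_mktuple !ler_norml => /andP[h1 h2] /andP[h3 h4] /andP[h5 h6].
  rewrite mulrDl mul1r in h6; have hs : s = 2 * r by [].
  move: h1 h2 h3 h4 h5 h6 hs; set F := (_ * s); move=> *; apply/andP; split; lra.
have K0 : 0 <= M * (2 * (3 * r)) ^+ d.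
  by apply: mulr_ge0 => //; apply: exprn_ge0; lra.
have hfac n (i : 'I_k) :
    (P (X (lift ord0 i) @^-1` Bn n (lift ord0 i)) <= (M * (2 * (3 * r)) ^+ d)%:E)%E.
  rewrite /Bn; case: (pickle_inv n) => [z|]; last first.
    by rewrite preimage_set0 measure0 lee_fin.
  rewrite eq_sym (negbTE (neq_lift ord0 i)).
  apply: (density_box (c := ctr z)) => //; last exact: box_meas.
  by lra.
have hAn n : (P (A n) <= P (X ord0 @^-1` Bn n ord0) *
    ((M * (2 * (3 * r)) ^+ d) ^+ k)%:E)%E.
  rewrite /A (hind (Bn n)); last by move=> i; exact: mB.
  rewrite big_ord_recl; apply: lee_wpmul2l => //.
  apply: prod_le => // i; exact: measure_ge0.
have trivB : trivIset setT (fun n => X ord0 @^-1` Bn n ord0).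
  move=> n m _ _ [w [/= h1 h2]].
  move: h1 h2; rewrite /Bn.
  case En: (pickle_inv n) => [z|] //; case Em: (pickle_inv m) => [z'|] //.
  rewrite eqxx => h1 h2.
  have zz : z = z'.
    apply: eq_from_tnth => j; apply: (floor_uniq (y := tnth (X ord0 w) j) s0).
      by have := h1 j; rewrite /= in_itv.
    by have := h2 j; rewrite /= in_itv.
  have := @pickle_invK (d.-tuple int) n; have := @pickle_invK (d.-tuple int) m; rewrite En Em /= zz.
  by move=> -> ->.
have sum1 : (\sum_(n <oo) P (X ord0 @^-1` Bn n ord0) <= 1)%E.
  have := measure_bigcup P setT (fun n => X ord0 @^-1` Bn n ord0)
    (fun n _ => preim_meas (mX ord0) (mB n ord0)) trivB.
  rewrite (@eq_eseriesl _ _ xpredT); last by move=> n; rewrite in_setT.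
  move=> <-; apply: probability_le1.
  by apply: bigcup_measurable => n _; apply: preim_meas.
have := @measure_sigma_subadditive _ _ _ P _ _ mA (event_meas r0 mX) cover.
move=> /le_trans; apply.
set K := (M * (2 * (3 * r)) ^+ d) ^+ k.
apply: (@le_trans _ _ (\sum_(n <oo) (P (X ord0 @^-1` Bn n ord0) * K%:E))%E).
  apply: lee_nneseries => n _; [by move=> _; exact: measure_ge0 | exact: hAn n].
rewrite (@eq_eseriesr _ _ (fun n => K%:E * P (X ord0 @^-1` Bn n ord0))%E);
  last by move=> n _; rewrite muleC.
rewrite nneseriesZl; last by move=> n _; exact: measure_ge0.
apply: le_trans (lee_wpmul2l _ sum1) _; first by rewrite lee_fin exprn_ge0.
rewrite mule1 lee_fin le_eqVlt; apply/orP; left; apply/eqP.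
rewrite /K (_ : 2 * (3 * r) = 6 * r); last by lra.
by rewrite [(6 * r) ^+ d]exprMn mulrA exprMn -exprM.
Qed.
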